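(* Let $F:\mathbb{R}^n\rightrightarrows\mathbb{R}^n$ be a set-valued mapping with closed graph, and let $(\bar x,0)\in\mathrm{gph}\, F$. Assume that $F$ is semismooth$^*$ at $(\bar x,0)$ and that there are positive reals $\bar\delta$ and $\kappa$ such that for every $(x,y)\in\mathrm{gph}\, F$ with $\|(x,y)-(\bar x,0)\|\le\bar\delta$ there exists a pair of matrices $(A,B)\in\mathcal{A}_{\rm reg}F(x,y)$ with \[\|A^{-1}\|\,\|(A\,\vdots\,B)\|_F\le\kappa.\] Then $\bar x$ is an isolated solution of the inclusion $0\in F(x)$.
   Context: For a closed set $C\subset\mathbb{R}^p$ and $\bar z\in C$, the tangent cone is $T_C(\bar z)=\{w:\exists t_k\downarrow 0,\ w_k\to w \text{ with } \bar z+t_kw_k\in C\}$, and the regular normal cone is $\widehat N_C(\bar z)=\{z^*:\langle z^*,w\rangle\le 0\ \forall w\in T_C(\bar z)\}$. For a direction $w\in\mathbb{R}^p$, the directional limiting normal cone $N_C(\bar z;w)$ is the set of all $z^*$ for which there exist $t_k\downarrow 0$, $w_k\to w$ and $z_k^*\to z^*$ with $\bar z+t_kw_k\in C$ and $z_k^*\in\widehat N_C(\bar z+t_kw_k)$. The limiting normal cone is $N_C(\bar z)=N_C(\bar z;0)$. For $F:\mathbb{R}^n\rightrightarrows\mathbb{R}^m$ and $(\bar x,\bar y)\in\mathrm{gph}\, F$, the limiting coderivative is $D^*F(\bar x,\bar y)(v^* )=\{u^*:(u^*,-v^* )\in N_{\mathrm{gph}\, F}(\bar x,\bar y)\}$ and,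 for $(u,v)\in\mathbb{R}^n\times\mathbb{R}^m$, the directional limiting coderivative is $D^*F((\bar x,\bar y);(u,v))(v^* )=\{u^*:(u^*,-v^* )\in N_{\mathrm{gph}\, F}((\bar x,\bar y);(u,v))\}$. Graphs of coderivatives are written as $\mathrm{gph}\, D^*F(\bar x,\bar y)=\{(v^*,u^* ):u^*\in D^*F(\bar x,\bar y)(v^* )\}$ (and analogously for the directional one). $F$ is called semismooth$^*$ at $(\bar x,\bar y)\in\mathrm{gph}\, F$ if for all $(u,v)\in\mathbb{R}^n\times\mathbb{R}^m$ one has $\langle u^*,u\rangle=\langle v^*,v\rangle$ for all $(v^*,u^* )\in\mathrm{gph}\, D^*F((\bar x,\bar y);(u,v))$. For $F:\mathbb{R}^n\rightrightarrows\mathbb{R}^n$ and $(x,y)\in\mathrm{gph}\, F$, $\mathcal{A}F(x,y)$ denotes the set of all pairs $(A,B)$ of $n\times n$ matrices such that there exist $n$ elements $(y_i^*,x_i^* )\in\mathrm{gph}\, D^*F(x,y)$, $i=1,\dots,n$, with the $i$-th row of $A$ equal to $(x_i^* )^T$ and the $i$-th row of $B$ equal to $(y_i^* )^T$; and $\mathcal{A}_{\rm reg}F(x,y)=\{(A,B)\in\mathcal{A}F(x,y): A \text{ nonsingular}\}$. $\|(A\,\vdots\,B)\|_F$ is the Frobenius norm of the $n\times 2n$ matrix obtained by placing $A$ and $B$ side by side; $\|A^{-1}\|$ is the spectral norm. An isolated solution means there is a neighborhood of $\bar x$ containing no other solution. *)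

(* Defs.v *)
From HB Require Import structures.
From mathcomp Require Import all_boot all_order all_algebra.
From mathcomp Require Import all_classical all_reals all_analysis.
Set Implicit Arguments. Unset Strict Implicit. Unset Printing Implicit Defensive.
Import Order.TTheory GRing.Theory Num.Theory.
Import numFieldNormedType.Exports.
Local Open Scope classical_set_scope.
Local Open Scope ring_scope.

Section Defs.
Variable R : realType.

Definition dotv (p : nat) (a b : 'cV[R]_p) : R := \sum_(i < p) a i 0 * b i 0.
Definition norm2 (p : nat) (a : 'cV[R]_p) : R := Num.sqrt (dotv a a).

Definition frob (m k : nat) (M : 'M[R]_(m, k)) : R :=
  Num.sqrt (\sum_(i < m) \sum_(j < k) M i j ^+ 2).

Definition specnorm (m k : nat) (M : 'M[R]_(m, k)) : R :=
  sup [set norm2 (M *m v) | v in [set v : 'cV[R]_k | norm2 v <= 1]].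

Definition tangent_cone (p : nat) (C : set 'cV[R]_p) (zb : 'cV[R]_p) : set 'cV[R]_p :=
  [set w | exists (t : nat -> R) (ws : nat -> 'cV[R]_p),
     (forall k, 0 < t k) /\ t @ \oo --> (0 : R) /\ ws @ \oo --> w /\
     (forall k, C (zb + t k *: ws k))].

Definition reg_normal_cone (p : nat) (C : set 'cV[R]_p) (zb : 'cV[R]_p) : set 'cV[R]_p :=
  [set zs | forall w, tangent_cone C zb w -> dotv zs w <= 0].

Definition dir_normal_cone (p : nat) (C : set 'cV[R]_p) (zb w : 'cV[R]_p) : set 'cV[R]_p :=
  [set zs | exists (t : nat -> R) (ws zss : nat -> 'cV[R]_p),
     (forall k, 0 < t k) /\ t @ \oo --> (0 : R) /\ ws @ \oo --> w /\
     zss @ \oo --> zs /\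
     (forall k, C (zb + t k *: ws k)) /\
     (forall k, reg_normal_cone C (zb + t k *: ws k) (zss k))].

Definition lim_normal_cone (p : nat) (C : set 'cV[R]_p) (zb : 'cV[R]_p) : set 'cV[R]_p :=
  dir_normal_cone C zb 0.

Definition gph (n m : nat) (F : 'cV[R]_n -> set 'cV[R]_m) : set 'cV[R]_(n + m) :=
  [set z | exists x y, F x y /\ z = col_mx x y].

Definition coderiv (n m : nat) (F : 'cV[R]_n -> set 'cV[R]_m)
  (x : 'cV[R]_n) (y : 'cV[R]_m) (vs : 'cV[R]_m) : set 'cV[R]_n :=
  [set us | lim_normal_cone (gph F) (col_mx x y) (col_mx us (- vs))].

Definition dir_coderiv (n m : nat) (F : 'cV[R]_n -> set 'cV[R]_m)
  (x : 'cV[R]_n) (y : 'cV[R]_m) (u : 'cV[R]_n) (v : 'cV[R]_m) (vs : 'cV[R]_m)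
  : set 'cV[R]_n :=
  [set us | dir_normal_cone (gph F) (col_mx x y) (col_mx u v) (col_mx us (- vs))].

Definition semismooth_star (n m : nat) (F : 'cV[R]_n -> set 'cV[R]_m)
  (xb : 'cV[R]_n) (yb : 'cV[R]_m) : Prop :=
  forall (u : 'cV[R]_n) (v : 'cV[R]_m) (vs : 'cV[R]_m) (us : 'cV[R]_n),
    dir_coderiv F xb yb u v vs us -> dotv us u = dotv vs v.

(* \mathcal{A}F(x,y): the i-th rows of A and B are (x_i^* )^T and (y_i^* )^T
   for some (y_i^*, x_i^* ) in gph D*F(x,y) *)
Definition AF (n : nat) (F : 'cV[R]_n -> set 'cV[R]_n) (x y : 'cV[R]_n)
  : set ('M[R]_n * 'M[R]_n) :=
  [set AB | forall i : 'I_n,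
     coderiv F x y (row i AB.2)^T (row i AB.1)^T].

Definition AregF (n : nat) (F : 'cV[R]_n -> set 'cV[R]_n) (x y : 'cV[R]_n)
  : set ('M[R]_n * 'M[R]_n) :=
  [set AB | AF F x y AB /\ AB.1 \in unitmx].

End Defs.

(* Main.v *)
Require Import Defs.
From HB Require Import structures.
From mathcomp Require Import all_boot all_order all_algebra.
From mathcomp Require Import all_classical all_reals all_analysis.
From mathcomp Require Import ring lra.
Import Order.TTheory GRing.Theory Num.Theory.
Import numFieldNormedType.Exports.
Local Open Scope classical_set_scope.
Local Open Scope ring_scope.
Set Implicit Arguments. Unset Strict Implicit.

Lemma dotv_ge0 (R : realType) p (a : 'cV[R]_p) : 0 <= dotv a a.
Proof. by apply: sumr_ge0 => i _; rewrite -expr2 sqr_ge0. Qed.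

Lemma norm2_ge0 (R : realType) p (a : 'cV[R]_p) : 0 <= norm2 a.
Proof. exact: sqrtr_ge0. Qed.

Lemma norm2_sq (R : realType) p (a : 'cV[R]_p) : norm2 a ^+ 2 = dotv a a.
Proof. exact/sqr_sqrtr/dotv_ge0. Qed.

Lemma norm2_eq0 (R : realType) p (a : 'cV[R]_p) : norm2 a = 0 -> a = 0.
Proof.
move=> /eqP; rewrite sqrtr_eq0 => h.
have h0 : dotv a a = 0 by apply/eqP; rewrite eq_le h dotv_ge0.
apply/matrixP => i j; rewrite (ord1 j) mxE.
have := @psumr_eq0P R _ xpredT (fun i => a i 0 * a i 0) _ h0 i isT.
by move=> /(_ _)/eqP; rewrite mulf_eq0 orbb => /(_ (fun k _ => ltac:(by rewrite -expr2 sqr_ge0)))/eqP.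
Qed.

Lemma dotvZ (R : realType) p (c : R) (a b : 'cV[R]_p) : dotv (c *: a) b = c * dotv a b.
Proof. rewrite /dotv mulr_sumr; apply: eq_bigr => i _; rewrite !mxE; ring. Qed.

Lemma dotvC (R : realType) p (a b : 'cV[R]_p) : dotv a b = dotv b a.
Proof. rewrite /dotv; apply: eq_bigr => i _; ring. Qed.

Lemma norm2Z (R : realType) p (c : R) (a : 'cV[R]_p) : norm2 (c *: a) = `|c| * norm2 a.
Proof.
rewrite /norm2 dotvZ dotvC dotvZ mulrA -expr2 sqrtrM ?sqr_ge0 //.
by rewrite sqrtr_sqr.
Qed.

Lemma entry_le_norm2 (R : realType) p (a : 'cV[R]_p) i : `|a i 0| <= norm2 a.
Proof.
rewrite -sqrtr_sqr /norm2 ler_sqrt ?dotv_ge0 // /dotv (bigD1 i) //= expr2 lerDl.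
by apply: sumr_ge0 => k _; rewrite -expr2 sqr_ge0.
Qed.

Lemma sum_sq_le (R : realType) (I : Type) (r : seq I) (g : I -> R) :
  (forall i, 0 <= g i) -> \sum_(i <- r) g i ^+ 2 <= (\sum_(i <- r) g i) ^+ 2.
Proof.
move=> g0; elim: r => [|a r IH]; first by rewrite !big_nil expr0n.
rewrite !big_cons.
have S0 : 0 <= \sum_(i <- r) g i by apply: sumr_ge0.
move: IH S0 (g0 a); set S := \sum_(i <- r) g i; set T := \sum_(i <- r) g i ^+ 2.
move=> IH S0 ga; nra.
Qed.

Lemma norm2_le_sum (R : realType) p (a : 'cV[R]_p) : norm2 a <= \sum_i `|a i 0|.
Proof.
have S0 : 0 <= \sum_i `|a i 0| by apply: sumr_ge0.
rewrite -(ger0_norm S0) -sqrtr_sqr /norm2 ler_sqrt ?sqr_ge0 //.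
have -> : dotv a a = \sum_i `|a i 0| ^+ 2.
  by apply: eq_bigr => i _; rewrite real_normK ?num_real // expr2.
by apply: sum_sq_le.
Qed.

Lemma dotv_col (R : realType) p q (a c : 'cV[R]_p) (b d : 'cV[R]_q) :
  dotv (col_mx a b) (col_mx c d) = dotv a c + dotv b d.
Proof. by rewrite /dotv big_split_ord /=; congr (_ + _); apply: eq_bigr => i _; rewrite ?col_mxEu ?col_mxEd. Qed.

Lemma dotv0 (R : realType) p (a : 'cV[R]_p) : dotv 0 a = 0.
Proof. by rewrite /dotv big1 // => i _; rewrite mxE mul0r. Qed.

Lemma norm2_col0 (R : realType) p q (a : 'cV[R]_p) : norm2 (col_mx a (0 : 'cV[R]_q)) = norm2 a.
Proof. by rewrite /norm2 dotv_col dotv0 addr0. Qed.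

Lemma entry_le_frob (R : realType) m k (M : 'M[R]_(m, k)) i j : `|M i j| <= frob M.
Proof.
rewrite -sqrtr_sqr /frob ler_sqrt; last by do 2 (apply: sumr_ge0 => ? _); exact: sqr_ge0.
rewrite (bigD1 i) //= (bigD1 j) //= -addrA lerDl.
apply: addr_ge0; first by apply: sumr_ge0 => ? _; exact: sqr_ge0.
by apply: sumr_ge0 => ? _; apply: sumr_ge0 => ? _; exact: sqr_ge0.
Qed.

Lemma mulmx_bound (R : realType) m k (M : 'M[R]_(m, k)) (v : 'cV[R]_k) :
  norm2 v <= 1 -> norm2 (M *m v) <= \sum_i \sum_j `|M i j|.
Proof.
move=> hv; apply: (le_trans (norm2_le_sum _)); apply: ler_sum => i _.
rewrite mxE; apply: (le_trans (ler_norm_sum _ _ _)); apply: ler_sum => j _.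
rewrite normrM; apply: ler_piMr => //.
exact: le_trans (entry_le_norm2 _ _) hv.
Qed.

Lemma specnorm_ge (R : realType) m k (M : 'M[R]_(m, k)) (v : 'cV[R]_k) :
  norm2 v <= 1 -> norm2 (M *m v) <= specnorm M.
Proof.
move=> hv; apply: ub_le_sup; last by exists v.
by exists (\sum_i \sum_j `|M i j|) => _ [w hw <-]; exact: mulmx_bound.
Qed.


Lemma cvg_bigsum (R : realType) (I : Type) (r : seq I) (f : I -> nat -> R) (l : I -> R) :
  (forall i, f i @ \oo --> l i) -> (fun m => \sum_(i <- r) f i m) @ \oo --> \sum_(i <- r) l i.
Proof.
move=> h; elim: r => [|a r IH].
  by under eq_fun do rewrite big_nil; rewrite big_nil; exact: cvg_cst.
under eq_fun do rewrite big_cons; rewrite big_cons.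
exact: cvgD.
Qed.

Lemma cvg_from_ball (R : realType) (M : pseudoMetricType R) (a : nat -> M) (l : M) :
  (forall m, ball l (m.+1%:R^-1) (a m)) -> a @ \oo --> l.
Proof.
move=> h; apply/cvg_ballP => e e0.
have := near_infty_natSinv_lt (PosNum e0); apply: filterS => m hm.
by apply: le_ball (h m); exact: ltW.
Qed.

Lemma seq_cluster (T : topologicalType) (K : set T) (s : nat -> T) :
  compact K -> (forall k, K (s k)) ->
  exists p, K p /\ forall N B, nbhs p B -> exists k, (N <= k)%N /\ B (s k).
Proof.
move=> cK sK.
have [p [Kp clp]] : exists p, (K `&` cluster (s @ \oo)) p.
  apply: (cK (s @ \oo)); exact: (@filterE _ \oo _ (fun k => K (s k)) sK).
exists p; split => // N B pB.
have [x [[k [hk ->]] Bx]] := clp [set x | exists k, (N <= k)%N /\ x = s k] B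
  (filterS (fun k hk => ex_intro _ k (conj hk erefl)) (nbhs_infty_ge N)) pB.
by exists k.
Qed.

Definition cube (R : realType) a b := [set M : 'M[R]_(a, b) | forall i j, `|M i j| <= 1].

Lemma cube_compact (R : realType) a b : compact (@cube R a b).
Proof.
have hc : compact [set v : 'rV[R]_(a * b) | forall i, `[-1, 1]%classic (v ord0 i)].
  exact: (@rV_compact R (a * b) (fun=> `[-1, 1]%classic) (fun _ => @segment_compact R (-1) 1)).
have -> : @cube R a b = vec_mx @` [set v : 'rV[R]_(a * b) | forall i, `[-1, 1]%classic (v ord0 i)].
  rewrite eqEsubset; split.
    move=> M hM; exists (mxvec M); last by rewrite mxvecK.
    move=> k; case/mxvec_indexP: k => i j; rewrite mxvecE /= in_itv /= -ler_norml.
    exact: hM.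
  move=> _ [v hv <-] i j; rewrite /vec_mx mxE ler_norml.
  by have := hv (mxvec_index i j); rewrite /= in_itv /=.
have cv : forall v : 'rV[R]_(a * b), vec_mx x @[x --> v] --> (vec_mx v : 'M[R]_(a, b)).
  move=> v; apply/(@cvg_ballP _ _ _ _ (@nbhs_filter _ v)) => e e0.
  near=> w.
  have [_ hw] : ball v e w by near: w; exact: nbhsx_ballx.
  by split => // i j; rewrite /vec_mx !mxE; exact: hw.
  Unshelve. all: end_near.
by apply: continuous_compact => //; apply: continuous_subspaceT => v; exact: cv.
Qed.


Lemma cvg_close (R : realType) (M : pseudoMetricType R) (a b : nat -> M) (l : M) :
  a @ \oo --> l -> (forall m, ball (a m) (m.+1%:R^-1) (b m)) -> b @ \oo --> l.
Proof.
move=> /cvg_ballP ha hb; apply/cvg_ballP => e e0.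
have e2 : 0 < e / 2 by rewrite divr_gt0.
apply: filterS2 (ha _ e2) (near_infty_natSinv_lt (PosNum e2)) => m h1 h2.
rewrite (splitr e); apply: ball_triangle h1 (le_ball _ (hb m)); exact: ltW.
Qed.

Lemma lim_cone_scale (R : realType) p (C : set 'cV[R]_p) z zs (c : R) :
  0 < c -> lim_normal_cone C z zs -> lim_normal_cone C z (c *: zs).
Proof.
move=> c0 [t [ws [zss [t0 [tc [wc [zc [hC hN]]]]]]]].
exists t, ws, (fun k => c *: zss k); do 4 (split => //).
  exact: cvgZr.
split => // k w hw; rewrite dotvZ; apply: mulr_ge0_le0; first exact: ltW.
exact: hN.
Qed.

Lemma dir_cone_diag (R : realType) p (C : set 'cV[R]_p) zb w zs
  (T : nat -> R) (W Z : nat -> 'cV[R]_p) :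
  (forall m, 0 < T m) -> T @ \oo --> 0 -> W @ \oo --> w -> Z @ \oo --> zs ->
  (forall m, lim_normal_cone C (zb + T m *: W m) (Z m)) ->
  dir_normal_cone C zb w zs.
Proof.
move=> T0 Tc Wc Zc hL.
have hj : forall m, exists sj : R * 'cV[R]_p * 'cV[R]_p,
    [/\ 0 < sj.1.1, C (zb + T m *: W m + sj.1.1 *: sj.1.2),
     reg_normal_cone C (zb + T m *: W m + sj.1.1 *: sj.1.2) sj.2,
     ball (W m) (m.+1%:R^-1) (W m + (sj.1.1 / T m) *: sj.1.2) &
     ball (Z m) (m.+1%:R^-1) sj.2].
  move=> m; have [s [ws [zss [s0 [sc [wc [zc [hC hN]]]]]]]] := hL m.
  have hs : (fun j => s j / T m) @ \oo --> 0.
    by rewrite -(mul0r (T m)^-1); apply: cvgMl.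
  have h1 : (fun j => W m + (s j / T m) *: ws j) @ \oo --> W m.
    rewrite -[X in _ --> X]addr0; apply: cvgD; first exact: cvg_cst.
    by rewrite -(scaler0 _ 0); apply: cvgZ.
  have e0 : 0 < m.+1%:R^-1 :> R by rewrite invr_gt0.
  have /cvg_ballP/(_ _ e0) B1 := h1.
  have /cvg_ballP/(_ _ e0) B2 := zc.
  have [j [hb1 hb2]] := @filter_ex _ \oo _ _ (filterI B1 B2).
  by exists (s j, ws j, zss j); split; [exact: s0|exact: hC|exact: hN|exact: hb1|exact: hb2].
have [g hg] := choice hj.
exists T, (fun m => W m + ((g m).1.1 / T m) *: (g m).1.2), (fun m => (g m).2).
have eq : forall m, zb + T m *: (W m + ((g m).1.1 / T m) *: (g m).1.2)
                = zb + T m *: W m + (g m).1.1 *: (g m).1.2.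
  move=> m; rewrite scalerDr scalerA addrA; congr (_ + _ *: _).
  by rewrite mulrC divfK // gt_eqF.
split => //; split => //; split.
  by apply: cvg_close Wc _ => m; have [] := hg m.
split.
  by apply: cvg_close Zc _ => m; have [] := hg m.
by split => m; rewrite eq; have [] := hg m.
Qed.


Lemma rowT_C (R : realType) n (A B : 'M[R]_n) (c : R) i :
  (row i (c *: row_mx A (- B)))^T = c *: col_mx (row i A)^T (- (row i B)^T).
Proof.
apply/matrixP => a b; rewrite (ord1 b).
case: (split_ordP a) => j ->.
  rewrite [RHS]mxE col_mxEu [LHS]mxE [LHS]mxE [LHS]mxE row_mxEl.
  by rewrite !mxE.
rewrite [RHS]mxE col_mxEd [LHS]mxE [LHS]mxE [LHS]mxE row_mxEr.
by rewrite !mxE mulrN.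
Qed.

Lemma cube_C (R : realType) n (A B : 'M[R]_n) :
  0 < frob (row_mx A B) -> cube ((frob (row_mx A B))^-1 *: row_mx A (- B)).
Proof.
move=> f0 i j; rewrite mxE normrM ger0_norm; last by rewrite invr_ge0 ltW.
rewrite ler_pdivrMl // mulr1.
apply: le_trans (entry_le_frob _ i j).
case: (split_ordP j) => k ->.
  by rewrite !row_mxEl.
by rewrite !row_mxEr mxE normrN.
Qed.

Lemma cube_w (R : realType) n (u : 'cV[R]_n) :
  norm2 u = 1 -> cube (col_mx u (0 : 'cV[R]_n)).
Proof.
move=> hu i j; rewrite (ord1 j).
case: (split_ordP i) => k ->.
  by rewrite col_mxEu -hu entry_le_norm2.
by rewrite col_mxEd mxE normr0.
Qed.

Lemma entry_cvg (R : realType) a b (Ms : nat -> 'M[R]_(a, b)) L :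
  (forall m, ball L (m.+1%:R^-1) (Ms m)) -> forall i j, (fun m => Ms m i j) @ \oo --> L i j.
Proof.
move=> h i j; apply: cvg_from_ball => m.
by have [_ hm] := h m; exact: hm.
Qed.

Lemma cvg_quad (R : realType) a b (Ms : nat -> 'M[R]_(a, b)) (vs : nat -> 'cV[R]_b) (L : 'M[R]_(a, b)) (l : 'cV[R]_b) :
  (forall i j, (fun m => Ms m i j) @ \oo --> L i j) ->
  (forall j, (fun m => vs m j 0) @ \oo --> l j 0) ->
  (fun m => dotv (Ms m *m vs m) (Ms m *m vs m)) @ \oo --> dotv (L *m l) (L *m l).
Proof.
move=> hM hv.
have e : forall (M : 'M[R]_(a, b)) (v : 'cV[R]_b), dotv (M *m v) (M *m v) =
   \sum_i ((\sum_j M i j * v j 0) * (\sum_j M i j * v j 0)).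
  by move=> M v; apply: eq_bigr => i _; rewrite !mxE.
rewrite e; under eq_fun do rewrite e.
apply: (cvg_bigsum (f := fun i m => (\sum_j Ms m i j * vs m j 0) * (\sum_j Ms m i j * vs m j 0))) => i.
have hs : (fun m => \sum_j Ms m i j * vs m j 0) @ \oo --> \sum_j L i j * l j 0.
  apply: (cvg_bigsum (f := fun j m => Ms m i j * vs m j 0)) => j.
  exact: cvgM.
exact: cvgM.
Qed.

Unset Implicit Arguments. Set Strict Implicit.

Theorem corollary3p4 (R : realType) (n : nat) (F : 'cV[R]_n -> set 'cV[R]_n)
  (xb : 'cV[R]_n) (deltab kappa : R) :
  closed (gph F) ->
  F xb 0 ->
  semismooth_star F xb 0 ->
  0 < deltab -> 0 < kappa ->
  (forall x y : 'cV[R]_n, F x y ->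
     norm2 (col_mx x y - col_mx xb 0) <= deltab ->
     exists AB : 'M[R]_n * 'M[R]_n,
       AregF F x y AB /\
       specnorm (invmx AB.1) * frob (row_mx AB.1 AB.2) <= kappa) ->
  exists eps : R, 0 < eps /\
    forall x : 'cV[R]_n, norm2 (x - xb) < eps -> F x 0 -> x = xb.
Proof.
move=> _ _ hss d0 k0 hAB.
apply: contrapT => hno.
have hx : forall k : nat, exists x, norm2 (x - xb) < Order.min deltab (k.+1%:R^-1) /\ F x 0 /\ x <> xb.
  move=> k; apply: contrapT => hk; apply: hno.
  exists (Order.min deltab (k.+1%:R^-1)); split.
    by rewrite lt_min d0 invr_gt0 ltr0n.
  move=> x hx Fx; apply: contrapT => nx; apply: hk; exists x; split => //.
have [xs hxs] := choice hx.
pose t k := norm2 (xs k - xb).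
have t0 : forall k, 0 < t k.
  move=> k; rewrite lt_neqAle norm2_ge0 andbT; apply/eqP => /esym/norm2_eq0/eqP.
  by rewrite subr_eq0 => /eqP; have [_ [_ ]] := hxs k.
pose u k := (t k)^-1 *: (xs k - xb).
have u1 : forall k, norm2 (u k) = 1.
  by move=> k; rewrite norm2Z ger0_norm ?invr_ge0 ?ltW // mulVf // gt_eqF.
have hA : forall k, exists AB : 'M[R]_n * 'M[R]_n,
       AregF F (xs k) 0 AB /\
       specnorm (invmx AB.1) * frob (row_mx AB.1 AB.2) <= kappa.
  move=> k; have [hk1 [hk2 _]] := hxs k; apply: hAB => //.
  rewrite opp_col_mx add_col_mx subrr norm2_col0.
  by apply: ltW; apply: lt_le_trans hk1 _; rewrite ge_min lexx.
have [ABs hABs] := choice hA.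
pose f k := frob (row_mx (ABs k).1 (ABs k).2).
pose Cm k := (f k)^-1 *: row_mx (ABs k).1 (- (ABs k).2).
pose wv k := col_mx (u k) (0 : 'cV[R]_n).
have key : forall k, 0 < f k /\ kappa^-1 <= (f k)^-1 * norm2 ((ABs k).1 *m u k).
  move=> k; have [[hAF hU] hS] := hABs k.
  move: hAF hU hS; rewrite /f.
  move: (ABs k) => [A B] /= hAF hU hS.
  set y := A *m u k.
  have y0 : y != 0.
    apply/eqP => y0.
    have hu : u k = invmx A *m y by rewrite /y mulKmx.
    move: (u1 k); rewrite hu y0 mulmx0 /norm2 /dotv big1 ?sqrtr0.
      by move=> /eqP; rewrite eq_sym oner_eq0.
    by move=> i _; rewrite mxE mul0r.
  have ny0 : 0 < norm2 y.
    rewrite lt_neqAle norm2_ge0 andbT; apply/eqP => /esym/norm2_eq0 h.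
    by rewrite h eqxx in y0.
  have hS1 : (norm2 y)^-1 <= specnorm (invmx A).
    have hle : norm2 ((norm2 y)^-1 *: y) <= 1.
      by rewrite norm2Z ger0_norm ?invr_ge0 ?norm2_ge0 // mulVf // gt_eqF.
    have := specnorm_ge (invmx A) hle.
    by rewrite -scalemxAr /y mulKmx // norm2Z ger0_norm ?invr_ge0 ?norm2_ge0 // u1 mulr1.
  have fge : 0 <= frob (row_mx A B) by exact: sqrtr_ge0.
  have f0 : 0 < frob (row_mx A B).
    rewrite lt_neqAle fge andbT; apply/eqP => hf.
    have : norm2 y <= 0.
      apply: le_trans (mulmx_bound A _) _; first by rewrite u1.
      rewrite big1 // => i _; rewrite big1 // => j _.
      have := entry_le_frob (row_mx A B) i (lshift n j); rewrite row_mxEl -hf => h.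
      by apply/eqP; rewrite eq_le h normr_ge0.
    by rewrite leNgt ny0.
  split => //.
  have h1 : (norm2 y)^-1 * frob (row_mx A B) <= kappa.
    exact: le_trans (ler_wpM2r (ltW f0) hS1) hS.
  move: h1; rewrite ler_pdivrMl // => h1.
  rewrite ler_pdivlMl // -(ler_pM2r k0) divfK ?gt_eqF //.
have cubeC : forall k, cube (Cm k) := fun k => cube_C (proj1 (key k)).
have cubeW : forall k, cube (wv k) := fun k => cube_w (u1 k).
pose s k := (Cm k, wv k).
have cK := compact_setX (@cube_compact R n (n + n)) (@cube_compact R (n + n) 1).
have [p [_ hp]] := seq_cluster cK (s := s) (fun k => conj (cubeC k) (cubeW k)).
have hk : forall m, exists k, (m <= k)%N /\ ball p (m.+1%:R^-1) (s k).
  move=> m; apply: hp; apply: nbhsx_ballx; by rewrite invr_gt0 ltr0n.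
have [ks hks] := choice hk.
have hC : forall m, ball p.1 (m.+1%:R^-1) (Cm (ks m)).
  by move=> m; have [_ [h _]] := hks m.
have hW : forall m, ball p.2 (m.+1%:R^-1) (wv (ks m)).
  by move=> m; have [_ [_ h]] := hks m.
have Tc : (fun m => t (ks m)) @ \oo --> (0 : R).
  apply: cvg_from_ball => m; rewrite /ball /= sub0r normrN gtr0_norm //.
  have [h1 _] := hxs (ks m); apply: lt_le_trans h1 _.
  rewrite ge_min; apply/orP; right.
  by rewrite lef_pV2 ?posrE ?ltr0n // ler_nat ltnS; exact: (hks m).1.
have Wc : (fun m => wv (ks m)) @ \oo --> p.2 := cvg_from_ball hW.
have hdir : forall i, dir_normal_cone (gph F) (col_mx xb 0) p.2 (row i p.1)^T.
  move=> i; apply: (dir_cone_diag (T := fun m => t (ks m)) (W := fun m => wv (ks m))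
     (Z := fun m => (row i (Cm (ks m)))^T)) => //.
    apply: cvg_from_ball => m; have [_ h] := hC m.
    split; [by rewrite invr_gt0 ltr0n | move=> a b]; rewrite (ord1 b).
    have e1 : forall M : 'M[R]_(n, n + n), (row i M)^T a 0 = M i a by move=> M; rewrite !mxE.
    by rewrite !e1; exact: h.
  move=> m; set k := ks m.
  have [[hAF _] _] := hABs k.
  have hL := hAF i.
  have ept : col_mx xb 0 + t k *: wv k = col_mx (xs k) 0.
    rewrite /wv scale_col_mx scaler0 add_col_mx addr0 /u scalerA mulfV ?gt_eqF //.
    by rewrite scale1r addrC subrK.
  rewrite ept /Cm rowT_C; apply: lim_cone_scale; last exact: hL.
  by rewrite invr_gt0; exact: (key k).1.
have hzero : forall i, (p.1 *m p.2) i 0 = 0.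
  move=> i; have hd := hdir i.
  set z := (row i p.1)^T in hd.
  have := hss (usubmx p.2) (dsubmx p.2) (- dsubmx z) (usubmx z).
  rewrite /dir_coderiv /= opprK !vsubmxK => /(_ hd) he.
  have -> : (p.1 *m p.2) i 0 = dotv z p.2.
    by rewrite mxE; apply: eq_bigr => j _; rewrite !mxE.
  have -> : dotv z p.2 = dotv (col_mx (usubmx z) (dsubmx z)) (col_mx (usubmx p.2) (dsubmx p.2)).
    by rewrite !vsubmxK.
  by rewrite dotv_col he -scaleN1r dotvZ mulN1r addNr.
have hWe := entry_cvg hW.
have hCe := entry_cvg hC.
have Psi_c := cvg_quad hCe (fun j => hWe j ord0).
have lim0 : dotv (p.1 *m p.2) (p.1 *m p.2) = 0.
  by rewrite /dotv big1 // => i _; rewrite hzero mul0r.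
rewrite lim0 in Psi_c.
have kk0 : 0 < kappa^-1 * kappa^-1 by rewrite mulr_gt0 // invr_gt0.
have ev := cvgr_lt _ Psi_c _ kk0.
have [m hm] := @filter_ex _ \oo _ _ (ev _).
move: hm; set k := ks m.
rewrite /Cm /wv -scalemxAl mul_row_col mulmx0 addr0 -norm2_sq norm2Z.
rewrite ger0_norm ?invr_ge0 ?ltW //; last exact: (key k).1.
have [_ hk2] := key k.
by rewrite expr2 ltNge (ler_pM _ _ hk2 hk2) // invr_ge0 ltW.
Qed.
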